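(* Let $(L,\vee,\wedge,\to,\gets,f,g,0,1)$ be an HBGC-algebra. Then there exists a GC-frame $\mathcal{F}=(X,\leq,R)$ such that $(L,\vee,\wedge,\to,\gets,f,g,0,1)$ is isomorphic to a subalgebra of the complex algebra $\mathbb{HB}_{\rm GC}(\mathcal{F})=(\mathcal{T}_\leq,\cup,\cap,\to,\gets,{}^\blacktriangle,{}^\blacktriangledown,\emptyset,X)$.
   Context: A Heyting–Brouwer algebra $(L,\vee,\wedge,\to,\gets,0,1)$ is a bounded lattice in which for all $a,b$ the relative pseudocomplement $a\to b$ (greatest $x$ with $a\wedge x\leq b$) and the co-implication $a\gets b$ (least $x$ with $b\leq a\vee x$) exist. An HBGC-algebra is a Heyting–Brouwer algebra with maps $f,g\colon L\to L$ forming an order-preserving Galois connection ($f(a)\leq b\iff a\leq g(b)$). A GC-frame $(X,\leq,R)$ is a set $X$ with a quasiorder $\leq$ and a relation $R\subseteq X\times X$ such that $x\leq x'$, $x\,R\,y$, $y'\leq y$ imply $x'\,R\,y'$. $\mathcal{T}_\leq$ is the set of upward $\leq$-closed subsets of $X$. For $A\subseteq X$: $A^\blacktriangle=\{x\mid x\,R\,y\text{ for some }y\in A\}$, $A^\blacktriangledown=\{x\mid y\,R\,x\text{ implies }y\in A\}$. On $\mathcal{T}_\leq$: $A\to B=\{a\in X\mid \forall b\geq a\,(b\in A\Rightarrow b\in B)\}$, $A\gets B=\{a\in X\mid \exists b\leq a\,(b\notin A\text{ and }b\in B)\}$. Isomorphisms preserve $\vee,\wedge,\to,\gets,f,g,0,1$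 with $f\leftrightarrow{}^\blacktriangle$, $g\leftrightarrow{}^\blacktriangledown$. *)

(* Defs.v *)
From mathcomp Require Import all_boot all_order.
Set Implicit Arguments. Unset Strict Implicit. Unset Printing Implicit Defensive.
Import Order.Theory.
Local Open Scope order_scope.

Definition is_rel_pseudocompl d (L : latticeType d) (imp : L -> L -> L) :=
  forall a b x : L, (a `&` x <= b) = (x <= imp a b).

Definition is_coimplication d (L : latticeType d) (coimp : L -> L -> L) :=
  forall a b x : L, (b <= a `|` x) = (coimp a b <= x).

Definition order_preserving d (L : latticeType d) (f : L -> L) :=
  forall a b : L, a <= b -> f a <= f b.

Definition galois_connection d (L : latticeType d) (f g : L -> L) :=
  forall a b : L, (f a <= b) = (a <= g b).

Definition quasiorder (X : Type) (le : X -> X -> Prop) :=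
  (forall x, le x x) /\ (forall x y z, le x y -> le y z -> le x z).

Definition GC_frame_cond (X : Type) (le R : X -> X -> Prop) :=
  forall x x' y y', le x x' -> R x y -> le y' y -> R x' y'.

Definition upset (X : Type) (le : X -> X -> Prop) (A : X -> Prop) :=
  forall x y, le x y -> A x -> A y.

Definition set_eq (X : Type) (A B : X -> Prop) := forall x, A x <-> B x.

Definition fimp (X : Type) (le : X -> X -> Prop) (A B : X -> Prop) : X -> Prop :=
  fun a => forall b, le a b -> A b -> B b.

Definition fcoimp (X : Type) (le : X -> X -> Prop) (A B : X -> Prop) : X -> Prop :=
  fun a => exists b, le b a /\ ~ A b /\ B b.

Definition blackup (X : Type) (R : X -> X -> Prop) (A : X -> Prop) : X -> Prop :=
  fun x => exists y, R x y /\ A y.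

Definition blackdown (X : Type) (R : X -> X -> Prop) (A : X -> Prop) : X -> Prop :=
  fun x => forall y, R y x -> A y.

(* Main.v *)
Require Import Defs.
From mathcomp Require Import all_boot all_order.
From mathcomp Require classical_sets.
From Stdlib Require Import Classical.
Set Implicit Arguments. Unset Strict Implicit.
Import Order.Theory.
Local Open Scope order_scope.

Section PFT.
Variables (d : Order.disp_t) (L : tbLatticeType d).

Definition filt (F : L -> Prop) :=
  F \top /\ (forall x y, x <= y -> F x -> F y) /\
  (forall x y, F x -> F y -> F (x `&` y)).
Definition idl (J : L -> Prop) :=
  J \bot /\ (forall x y, x <= y -> J y -> J x) /\
  (forall x y, J x -> J y -> J (x `|` y)).
Definition primef (F : L -> Prop) :=
  filt F /\ ~ F \bot /\ (forall x y, F (x `|` y) -> F x \/ F y).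

Hypothesis distr : forall m x y : L, m `&` (x `|` y) <= (m `&` x) `|` (m `&` y).

Lemma pft (Fl J : L -> Prop) : filt Fl -> idl J -> (forall x, Fl x -> J x -> False) ->
  exists G, primef G /\ (forall x, Fl x -> G x) /\ (forall x, G x -> J x -> False).
Proof.
move=> [Ft [Fu Fm]] [Jb [Jd Jj]] FJ.
pose P (A : L -> Prop) := filt (fun x => A x \/ Fl x) /\
   (forall x, (A x \/ Fl x) -> J x -> False).
have [|A [[[Mt [Mu Mm]] MJ] Amax]] := @classical_sets.Zorn_bigcup L P.
  move=> C CP Ctot; rewrite /P /classical_sets.bigcup /classical_sets.mkset /=.
  have inU : forall X x, C X -> X x -> exists2 i, C i & i x by move=> X x ? ?; exists X.
  split; [split; [|split]|].
  - by right.
  - move=> x y xy [[X CX Xx]|Flx]; last by right; exact: Fu Flx.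
    have [[_ [XU _]] _] := CP X CX.
    case: (XU x y xy (or_introl Xx)) => ?; [left; exact: inU CX _|right] => //.
  - move=> x y [[X CX Xx]|Flx] [[Y CY Yy]|Fly].
    + case: (Ctot X Y CX CY) => [XY|YX].
      * have [[_ [_ YM]] _] := CP Y CY.
        case: (YM x y (or_introl (XY _ Xx)) (or_introl Yy)) => ?; [left; exact: inU CY _|right] => //.
      * have [[_ [_ XM]] _] := CP X CX.
        case: (XM x y (or_introl Xx) (or_introl (YX _ Yy))) => ?; [left; exact: inU CX _|right] => //.
    + have [[_ [_ XM]] _] := CP X CX.
      case: (XM x y (or_introl Xx) (or_intror Fly)) => ?; [left; exact: inU CX _|right] => //.
    + have [[_ [_ YM]] _] := CP Y CY.
      case: (YM x y (or_intror Flx) (or_introl Yy)) => ?; [left; exact: inU CY _|right] => //.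
    + by right; apply: Fm.
  - move=> x [[X CX Xx]|Flx] Jx; last exact: FJ Flx Jx.
    have [_ XJ] := CP X CX; exact: XJ x (or_introl Xx) Jx.
pose M x := A x \/ Fl x.
have Mmax : forall B, filt B -> (forall x, B x -> J x -> False) ->
    (forall x, M x -> B x) -> forall x, B x -> M x.
  move=> B [Bt [Bu Bm]] BJ MB x Bx.
  have PB : P B.
    split; [split; [|split]|].
    - by left.
    - move=> u v uv H; left; apply: (Bu u) => //; case: H => // ?; apply: MB; by right.
    - move=> u v U V; left; apply: Bm;
      [case: U => // ?; apply: MB; by right | case: V => // ?; apply: MB; by right].
    - move=> u [Bu'|Flu] Ju; [exact: BJ Bu' Ju | exact: FJ Flu Ju].
  case: (classic (forall y, B y -> A y)) => [BA|nBA]; first by left; exact: BA.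
  exfalso; apply: (Amax B) => //; split => // y Ay; apply: MB; by left.
exists M; split; last split.
- split; first by split.
  split; first by move=> Mb; apply: MJ Mb Jb.
  move=> x y Mxy; apply: NNPP => /not_or_and [nx ny].
  have ext : forall z, ~ M z -> exists m, M m /\ J (m `&` z).
    move=> z nz; apply: NNPP => nex.
    pose B u := exists m, M m /\ m `&` z <= u.
    have Bz : B z by exists \top; split; [exact: Mt|rewrite meetC meetx1].
    apply: nz; apply: (Mmax B) => //.
    + split; first by exists \top; split => //; exact: lex1.
      split; first by move=> u v uv [m [Mm' mu]]; exists m; split => //; exact: le_trans uv.
      move=> u v [m1 [M1 m1u]] [m2 [M2 m2v]]; exists (m1 `&` m2); split; first exact: Mm.
      rewrite lexI; apply/andP; split.
      * apply: le_trans m1u; apply: leI2 => //; exact: leIl.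
      * apply: le_trans m2v; apply: leI2 => //; exact: leIr.
    + move=> u [m [Mm' mu]] Ju; apply: nex; exists m; split => //; exact: Jd mu Ju.
    + move=> u Mu0; exists u; split => //; exact: leIl.
  have [m1 [M1 J1]] := ext x nx.
  have [m2 [M2 J2]] := ext y ny.
  apply: (MJ ((m1 `&` m2) `&` (x `|` y)) _ _).
    exact: Mm (Mm _ _ M1 M2) Mxy.
  apply: (Jd _ _ (distr _ _ _)); apply: Jj.
  + apply: Jd J1; apply: leI2 => //; exact: leIl.
  + apply: Jd J2; apply: leI2 => //; exact: leIr.
- by move=> x; right.
- exact: MJ.
Qed.
End PFT.

Section Main.
Variables (d : Order.disp_t) (L : tbLatticeType d)
    (imp coimp : L -> L -> L) (f g : L -> L)
    (Himp : is_rel_pseudocompl imp) (Hcoimp : is_coimplication coimp)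
    (Hf : order_preserving f) (Hg : order_preserving g)
    (Hfg : galois_connection f g).

Lemma distrL : forall m x y : L, m `&` (x `|` y) <= (m `&` x) `|` (m `&` y).
Proof.
move=> m x y; rewrite Himp leUx; apply/andP; split; rewrite -Himp; [exact: leUl|exact: leUr].
Qed.

Lemma fjoin x y : f (x `|` y) <= f x `|` f y.
Proof. rewrite Hfg leUx; apply/andP; split; rewrite -Hfg; [exact: leUl|exact: leUr]. Qed.

Lemma fbot : f \bot <= \bot.
Proof. by rewrite Hfg le0x. Qed.

Lemma fg a : f (g a) <= a.
Proof. by rewrite Hfg. Qed.

Let pft' := @pft d L distrL.

Lemma upf (a : L) : filt (fun x => a <= x).
Proof.
split; first exact: lex1. split; first by move=> x y xy ax; exact: le_trans xy.
by move=> x y ax ay; rewrite lexI ax ay.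
Qed.

Lemma downi (b : L) : idl (fun x => x <= b).
Proof.
split; first exact: le0x. split; first by move=> x y xy yb; exact: le_trans yb.
by move=> x y xb yb; rewrite leUx xb yb.
Qed.

Lemma sep (a b : L) : ~ (a <= b) -> exists G, primef G /\ G a /\ ~ G b.
Proof.
move=> nab.
have [G [PG [FG GJ]]] := pft' (upf a) (downi b) (fun x ax xb => nab (le_trans ax xb)).
exists G; split => //; split; first exact: FG.
by move=> Gb; apply: (GJ b Gb).
Qed.

End Main.

Theorem proposition4p3 (d : Order.disp_t) (L : tbLatticeType d)
    (imp coimp : L -> L -> L) (f g : L -> L)
    (Himp : is_rel_pseudocompl imp) (Hcoimp : is_coimplication coimp)
    (Hf : order_preserving f) (Hg : order_preserving g)
    (Hfg : galois_connection f g) :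
  exists (X : Type) (le R : X -> X -> Prop),
    quasiorder le /\ GC_frame_cond le R /\
    exists h : L -> (X -> Prop),
      (forall a, upset le (h a)) /\
      (forall a b, set_eq (h a) (h b) -> a = b) /\
      (forall a b, set_eq (h (a `|` b)) (fun x => h a x \/ h b x)) /\
      (forall a b, set_eq (h (a `&` b)) (fun x => h a x /\ h b x)) /\
      (forall a b, set_eq (h (imp a b)) (fimp le (h a) (h b))) /\
      (forall a b, set_eq (h (coimp a b)) (fcoimp le (h a) (h b))) /\
      (forall a, set_eq (h (f a)) (blackup R (h a))) /\
      (forall a, set_eq (h (g a)) (blackdown R (h a))) /\
      set_eq (h \bot) (fun _ => False) /\
      set_eq (h \top) (fun _ => True).
Proof.
pose pft' := @pft d L (distrL Himp).
pose X := {F : L -> Prop | primef F}.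
exists X, (fun F G : X => forall x, sval F x -> sval G x),
  (fun F G : X => forall x, sval G x -> sval F (f x)).
split; first by split => [x y|x y z xy yz u] //; auto.
split; first by move=> x x' y y' xx' Rxy y'y u y'u; apply: xx'; apply: Rxy; apply: y'y.
exists (fun a (F : X) => sval F a).
split; first by move=> a x y xy; apply: xy.
split.
  move=> a b eqab; apply: le_anti; apply/andP; split; apply: NNPP => nab.
  - have [G [PG [Ga nGb]]] := sep Himp nab.
    by apply: nGb; apply: (proj1 (eqab (exist _ G PG))).
  - have [G [PG [Ga nGb]]] := sep Himp nab.
    by apply: nGb; apply: (proj2 (eqab (exist _ G PG))).
split.
  move=> a b [F [[Ft [Fu Fm]] [Fb Fp]]] /=; split; first exact: Fp.
  by case=> ?; [apply: (Fu a)|apply: (Fu b)] => //; [exact: leUl|exact: leUr].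
split.
  move=> a b [F [[Ft [Fu Fm]] [Fb Fp]]] /=; split; last by case; apply: Fm.
  by move=> H; split; apply: (Fu (a `&` b)) => //; [exact: leIl|exact: leIr].
split.
  move=> a b [F PF] /=; split.
    move=> Fi [G [[Gt [Gu Gm]] _]] /= FG Ga; apply: (Gu (a `&` imp a b)).
      by rewrite Himp.
    exact: Gm Ga (FG _ Fi).
  move=> H; apply: NNPP => nFi.
  have [[Ft [Fu Fm]] [Fb Fp]] := PF.
  pose Fl z := exists c, F c /\ a `&` c <= z.
  have fl : filt Fl.
    split; first by exists \top; split => //; exact: lex1.
    split; first by move=> u v uv [c [Fc cu]]; exists c; split => //; exact: le_trans uv.
    move=> u v [c1 [F1 c1u]] [c2 [F2 c2v]]; exists (c1 `&` c2); split; first exact: Fm.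
    rewrite lexI; apply/andP; split.
    * apply: le_trans c1u; apply: leI2 => //; exact: leIl.
    * apply: le_trans c2v; apply: leI2 => //; exact: leIr.
  have [G [PG [FlG GJ]]] := pft' _ _ fl (downi b)
    (fun z '(ex_intro c (conj Fc cz)) zb =>
       nFi (Fu c _ (eq_ind _ is_true (le_trans cz zb) _ (Himp a b c)) Fc)).
  apply: (GJ b) => //; apply: (H (exist _ G PG)) => /=.
  + by move=> x Fx; apply: FlG; exists x; split => //; exact: leIr.
  + apply: FlG; exists \top; split => //; exact: leIl.
split.
  move=> a b [F PF] /=; have [[Ft [Fu Fm]] [Fb Fp]] := PF; split.
    move=> Fc.
    pose J x := exists i, ~ F i /\ x <= a `|` i.
    have ji : idl J.
      split; first by exists \bot; split => //; exact: le0x.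
      split; first by move=> x y xy [i [nFi yi]]; exists i; split => //; exact: le_trans yi.
      move=> x y [i [nFi xi]] [j [nFj yj]]; exists (i `|` j); split.
        by case/Fp.
      rewrite leUx; apply/andP; split.
      * apply: le_trans xi _; apply: leU2 => //; exact: leUl.
      * apply: le_trans yj _; apply: leU2 => //; exact: leUr.
    have [G [PG [FlG GJ]]] := pft' _ _ (upf b) ji
      (fun z bz '(ex_intro i (conj nFi zi)) =>
        nFi (Fu _ _ (eq_ind _ is_true (le_trans bz zi) _ (Hcoimp a b i)) Fc)).
    exists (exist _ G PG); split; [|split] => /=.
    + move=> x Gx; apply: NNPP => nFx; apply: (GJ x Gx); exists x; split => //; exact: leUr.
    + move=> Ga; apply: (GJ a Ga); exists \bot; split => //; exact: leUl.
    + exact: FlG.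
  move=> [[G [[Gt [Gu Gm]] [Gb Gp]]] /= [GF [nGa Gb']]].
  apply: GF; case: (Gp a (coimp a b)) => //.
  by apply: (Gu b) => //; rewrite Hcoimp.
split.
  move=> a [F PF] /=; have [[Ft [Fu Fm]] [Fb Fp]] := PF; split.
    move=> Ffa.
    pose J x := ~ F (f x).
    have ji : idl J.
      split; first by move=> H; apply: Fb; apply: (Fu _ _ (fbot Hfg)).
      split; first by move=> x y xy Jy Fx; apply: Jy; apply: (Fu _ _ (Hf _ _ xy)).
      move=> x y Jx Jy Fxy; case: (Fp (f x) (f y)) => //.
      exact: (Fu _ _ (fjoin Hfg x y)).
    have [G [PG [FlG GJ]]] := pft' _ _ (upf a) ji
      (fun z az Jz => Jz (Fu _ _ (Hf _ _ az) Ffa)).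
    exists (exist _ G PG); split => /=.
    + by move=> x Gx; apply: NNPP => nF; apply: (GJ x Gx).
    + by apply: FlG.
  by move=> [G [RFG Ga]]; apply: RFG.
split.
  move=> a [F PF] /=; have [[Ft [Fu Fm]] [Fb Fp]] := PF; split.
    move=> Fga [G [[Gt [Gu Gm]] _]] /= RGF; apply: (Gu _ _ (fg Hfg a)); exact: RGF.
  move=> H; apply: NNPP => nF.
  pose Fl z := exists c, F c /\ f c <= z.
  have fl : filt Fl.
    split; first by exists \top; split => //; exact: lex1.
    split; first by move=> u v uv [c [Fc cu]]; exists c; split => //; exact: le_trans uv.
    move=> u v [c1 [F1 c1u]] [c2 [F2 c2v]]; exists (c1 `&` c2); split; first exact: Fm.
    rewrite lexI; apply/andP; split.
    * apply: le_trans c1u; apply: Hf; exact: leIl.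
    * apply: le_trans c2v; apply: Hf; exact: leIr.
  have [G [PG [FlG GJ]]] := pft' _ _ fl (downi a)
    (fun z '(ex_intro c (conj Fc cz)) za =>
       nF (Fu c _ (eq_ind _ is_true (le_trans cz za) _ (Hfg c a)) Fc)).
  apply: (GJ a) => //; apply: (H (exist _ G PG)) => /= x Fx.
  by apply: FlG; exists x; split.
split.
  by move=> [F [_ [Fb _]]] /=; split.
by move=> [F [[Ft _] _]] /=; split.
Qed.
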